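(* Let $D$ be a dataset of $N\ge1$ records over $\Omega$, let $r\subseteq[d]$, and let $\hat D$ be the dataset obtained by drawing $K\ge1$ records from $D$ uniformly at random with replacement. Let $\mu=\frac1N M_r(D)$ and $s(x)=\lceil K\mu(x)\rceil$ for $x\in\Omega_r$. Then $$\mathbb{E}\Big[\Big\|\tfrac1N M_r(D)-\tfrac1K M_r(\hat D)\Big\|_1\Big] = \frac{2}{K}\sum_{x\in\Omega_r} s(x)\binom{K}{s(x)}\mu(x)^{s(x)}(1-\mu(x))^{K-s(x)+1}$$ (with the convention $0^0=1$).
   Context: A dataset is a finite multiset of records in $\Omega=\Omega_1\times\dots\times\Omega_d$, each $\Omega_i$ finite. For $r\subseteq[d]$, $\Omega_r=\prod_{i\in r}\Omega_i$, $x_r=(x_i)_{i\in r}$, and the marginal $M_r(D)$ is the vector indexed by $t\in\Omega_r$ with $M_r(D)[t]=\sum_{x\in D}\mathbb{1}[x_r=t]$. *)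

(* Defs.v *)
From HB Require Import structures.
From mathcomp Require Import all_boot all_order all_algebra.
Set Implicit Arguments. Unset Strict Implicit. Unset Printing Implicit Defensive.
Import Order.TTheory GRing.Theory Num.Theory.

Definition Omega (d : nat) (Om : 'I_d -> finType) : finType :=
  {dffun forall i : 'I_d, Om i}.

Definition Omega_r (d : nat) (Om : 'I_d -> finType) (r : {set 'I_d}) : finType :=
  {dffun forall i : {i : 'I_d | i \in r}, Om (sval i)}.

Definition proj_r (d : nat) (Om : 'I_d -> finType) (r : {set 'I_d})
  (x : Omega Om) : Omega_r Om r :=
  [ffun i : {i : 'I_d | i \in r} => x (sval i)] : {dffun forall i : {i : 'I_d | i \in r}, Om (sval i)}.

(* A dataset of n records is a function 'I_n -> Omega (a multiset with
   multiplicities given by the fibres).  Marginal M_r(D)[t]. *)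
Definition marginal (d : nat) (Om : 'I_d -> finType) (r : {set 'I_d}) (n : nat)
  (D : 'I_n -> Omega Om) (t : Omega_r Om r) : nat :=
  #|[set i : 'I_n | proj_r r (D i) == t]|.
Arguments marginal {d Om} r {n} D t.
Arguments proj_r {d Om} r x.

(* Main.v *)
Require Import Defs.
From HB Require Import structures.
From mathcomp Require Import all_boot all_order all_algebra.
From mathcomp Require Import ring lra.
Import Order.TTheory GRing.Theory Num.Theory.
Local Open Scope ring_scope.

Section Cnt.
Variable R : archiRealFieldType.

Definition consf N K (i : 'I_N) (g : {ffun 'I_K -> 'I_N}) : {ffun 'I_K.+1 -> 'I_N} :=
  [ffun j => if unlift ord0 j is Some j' then g j' else i].

Arguments consf {N K}.
Lemma sum_ffunS N K (F : {ffun 'I_K.+1 -> 'I_N} -> R) :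
  \sum_f F f = \sum_(i : 'I_N) \sum_(g : {ffun 'I_K -> 'I_N}) F (consf i g).
Proof.
rewrite pair_big /=.
rewrite (reindex (fun p : 'I_N * {ffun 'I_K -> 'I_N} => consf p.1 p.2)) //=.
exists (fun f => (f ord0, [ffun j => f (lift ord0 j)])) => [[i g] _ | f _].
- by congr pair; [rewrite /consf ffunE unlift_none | apply/ffunP=> j; rewrite !ffunE liftK].
- apply/ffunP=> j; rewrite /consf ffunE; case: unliftP => [j' ->|->]; by rewrite ?ffunE.
Qed.

Lemma sum_consf N K (a : pred 'I_N) i g :
  (\sum_(j < K.+1) a (consf i g j) = a i + \sum_(j < K) a (g j))%N.
Proof.
rewrite big_ord_recl /consf ffunE unlift_none; congr addn.
by apply: eq_bigr => j _; rewrite ffunE liftK.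
Qed.

Lemma count_ffun N (a : pred 'I_N) K (G : nat -> R) :
 \sum_(f : {ffun 'I_K -> 'I_N}) G (\sum_(j < K) a (f j))%N =
 \sum_(k < K.+1) ('C(K, k) * #|a| ^ k * #|[predC a]| ^ (K - k))%:R * G k.
Proof.
elim: K G => [|K IH] G.
  under eq_bigr => f _ do rewrite big_ord0.
  by rewrite sumr_const card_ffun !card_ord expn0 big_ord1 /= mul1r.
rewrite sum_ffunS.
under eq_bigr => i _ do (under eq_bigr => g _ do rewrite sum_consf; rewrite (IH (fun k => G (a i + k)%N))).
rewrite (bigID a) /=.
under eq_bigr => i ai do rewrite ai.
under [X in _ + X]eq_bigr => i ai do rewrite (negbTE ai).
rewrite !sumr_const.
have -> : #|(fun i => ~~ a i)| = #|[predC a]| by apply: eq_card.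
move: #|a| #|[predC a]| => m n.
have bump0 i : bump 0 i = i.+1 by [].
rewrite [in RHS]big_ord_recl /= subn0 bin0 expn0 mul1n.
under [X in _ = _ + X]eq_bigr => i _ do rewrite bump0 binS subSS !mulnDl natrD mulrDl.
rewrite big_split /=.
rewrite -!sumrMnl.
have nmulE (w k : nat) (x : R) : (w%:R * x) *+ k = (w * k)%:R * x.
  by rewrite natrM -mulrnAl mulr_natr mulrnAl.
have E1 : \sum_(i<K.+1) ('C(K, i) * m ^ i * n ^ (K - i))%:R * G (1 + i)%N *+ m
   = \sum_(i<K.+1) ('C(K,i) * m^i.+1 * n^(K-i))%:R * G i.+1.
  apply: eq_bigr => i _; rewrite nmulE add1n.
  by rewrite expnSr mulnA mulnAC.
have E2 : \sum_(i<K.+1) ('C(K, i) * m ^ i * n ^ (K - i))%:R * G (0 + i)%N *+ n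
   = (n^K.+1)%:R * G 0%N + \sum_(i<K.+1) ('C(K,i.+1) * m^i.+1 * n^(K-i))%:R * G i.+1.
  rewrite big_ord_recl /= nmulE bin0 subn0 expn0 !mul1n -expnSr; congr (_ + _).
  rewrite [in RHS]big_ord_recr /= bin_small // !mul0n mul0r addr0.
  apply: eq_bigr => i _; rewrite nmulE bump0 add0n; congr (_%:R * _).
  by rewrite -!mulnA -expnSr subnSK.
rewrite E1 E2 mul1n addrC -addrA; congr (_ + _); by rewrite addrC.
Qed.
Lemma demoivre (p q : R) (K s : nat) : p + q = 1 -> (s <= K)%N ->
  (forall k, (k < s)%N -> k%:R < K%:R * p) ->
  (forall k, (s <= k)%N -> K%:R * p <= k%:R) ->
  \sum_(k < K.+1) ('C(K,k))%:R * p^+k * q^+(K-k) * `|K%:R * p - k%:R|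
  = 2 * (s%:R * 'C(K,s)%:R * p^+s * q^+(K-s+1)).
Proof.
move=> pq sK Hlt Hge.
pose T k : R := k%:R * 'C(K,k)%:R * p^+k * q^+(K-k+1).
have HT k : (k <= K)%N ->
  'C(K,k)%:R * p^+k * q^+(K-k) * (K%:R * p - k%:R) = T k.+1 - T k.
  move=> kK; rewrite /T.
  have qE : q = 1 - p by rewrite -pq addrC addKr.
  case: (ltnP k K) => kK'.
    rewrite -natrM mul_bin_left natrM natrB ?(ltnW kK') //.
    have e1 : (K - k = (K - k.+1).+1)%N by rewrite subnSK.
    rewrite !addn1 e1 !exprS.
    move: (q ^+ (K - k.+1)) => Q.
    rewrite qE; ring.
  have -> : k = K by apply/eqP; rewrite eqn_leq kK kK'.
  rewrite (bin_small (ltnSn K)) subnn binn addn1 expr1 expr0 qE; ring.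
rewrite -(big_mkord xpredT (fun k => 'C(K,k)%:R * p^+k * q^+(K-k) * `|K%:R * p - k%:R|)).
rewrite (big_cat_nat (n:=s)) /= ?leq0n; last by rewrite ltnW.
rewrite (@telescope_sumr_eq _ _ _ T); last 2 first.
- exact: leq0n.
- move=> k /andP[_ ks]; rewrite -HT; last by apply: ltnW; apply: leq_trans sK.
  by rewrite ger0_norm // subr_ge0 ltW // Hlt.
rewrite (@telescope_sumr_eq _ _ _ (fun k => - T k)); last 2 first.
- by rewrite ltnW.
- move=> k /andP[sk kK]; rewrite -opprD -HT; last by rewrite -ltnS.
  by rewrite ler0_norm ?mulrN // subr_le0 Hge.
have T0 : T 0%N = 0 by rewrite /T !mul0r.
have TK : T K.+1 = 0 by rewrite /T bin_small // mulr0 !mul0r.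
by rewrite T0 TK /T; ring.
by [].
Qed.

Lemma per_t N K (a : pred 'I_N) : (0 < N)%N -> (0 < K)%N ->
 let mu := #|a|%:R / N%:R : R in let s := `|Num.ceil (K%:R * mu)|%N in
 (N%:R ^+ K)^-1 * \sum_(f : {ffun 'I_K -> 'I_N})
     `|#|a|%:R / N%:R - (\sum_(j<K) a (f j))%N%:R / K%:R|
 = 2 / K%:R * (s%:R * 'C(K,s)%:R * mu ^+ s * (1 - mu) ^+ (K - s + 1)).
Proof.
move=> N0 K0 mu s; rewrite /s /mu; clear s mu.
rewrite (@count_ffun N a K (fun k => `|#|a|%:R / N%:R - k%:R / K%:R|)).
have mn : (#|a| + #|[predC a]| = N)%N by rewrite cardC card_ord.
move: #|a| #|[predC a]| mn => m n mn.
set s := `|Num.ceil (K%:R * (m%:R / N%:R))|%N.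
have N0' : N%:R != 0 :> R by rewrite pnatr_eq0 -lt0n.
have K0' : K%:R != 0 :> R by rewrite pnatr_eq0 -lt0n.
set p := m%:R / N%:R.
pose q : R := n%:R / N%:R.
have pq : p + q = 1 by rewrite -mulrDl -natrD mn divff.
have qE : 1 - p = q by rewrite -pq addrC addKr.
have p0 : 0 <= p by rewrite divr_ge0 ?ler0n.
have q0 : 0 <= q by rewrite divr_ge0 ?ler0n.
have p1 : p <= 1 by rewrite -pq lerDl.
have mE : m%:R = p * N%:R :> R by rewrite /p divfK.
have nE : n%:R = q * N%:R :> R by rewrite /q divfK.
rewrite qE.
have -> : \sum_(k < K.+1) ('C(K, k) * m ^ k * n ^ (K - k))%:R * `|p - k%:R / K%:R|
   = N%:R ^+ K / K%:R * \sum_(k < K.+1) ('C(K,k))%:R * p^+k * q^+(K-k) * `|K%:R * p - k%:R|.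
  rewrite mulr_sumr; apply: eq_bigr => k _.
  have kK : (k <= K)%N by rewrite -ltnS ltn_ord.
  rewrite !natrM !natrX mE nE !exprMn.
  have -> : p - k%:R / K%:R = (K%:R * p - k%:R) / K%:R by field.
  rewrite normrM normfV (ger0_norm (ler0n _ K)).
  have -> : N%:R ^+ K = N%:R ^+ k * N%:R ^+ (K - k) :> R by rewrite -exprD subnKC.
  by field.
have Hs0 : 0 <= Num.ceil (K%:R * p) by rewrite ceil_ge0 (lt_le_trans (ltrN10 R)) // mulr_ge0.
have sz : s%:Z = Num.ceil (K%:R * p) by rewrite /s gez0_abs.
rewrite (@demoivre p q K s pq).
- have NK0 : N%:R ^+ K != 0 :> R by rewrite expf_neq0.
  by field; rewrite K0' NK0.
- suff : (s%:Z <= K%:Z)%R by [].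
  by rewrite sz ceil_le_int -pmulrn ler_piMr ?ler0n.
- move=> k; suff : (k%:Z < s%:Z)%R = (k%:R < K%:R * p) by move=> <-.
  by rewrite sz ceil_gt_int -pmulrn.
- move=> k; suff : (s%:Z <= k%:Z)%R = (K%:R * p <= k%:R) by move=> <-.
  by rewrite sz ceil_le_int -pmulrn.
Qed.
End Cnt.

Theorem mainTheorem10 (R : archiRealFieldType) (d : nat) (Om : 'I_d -> finType)
  (r : {set 'I_d}) (N K : nat) (D : 'I_N -> Omega Om) :
  (0 < N)%N -> (0 < K)%N ->
  let mu := fun t : Omega_r Om r => (marginal r D t)%:R / N%:R : R in
  let s := fun t : Omega_r Om r => `|Num.ceil (K%:R * mu t)|%N in
  (N%:R ^+ K)^-1 *
    \sum_(f : {ffun 'I_K -> 'I_N})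
       \sum_(t : Omega_r Om r)
          `| (marginal r D t)%:R / N%:R
             - (marginal r (fun j => D (f j)) t)%:R / K%:R |
  = 2 / K%:R *
    \sum_(t : Omega_r Om r)
       (s t)%:R * ('C(K, s t))%:R * mu t ^+ s t * (1 - mu t) ^+ (K - s t + 1).
Proof.
move=> N0 K0 mu s; rewrite /s /mu; clear s mu.
rewrite exchange_big mulr_sumr [RHS]mulr_sumr; apply: eq_bigr => t _.
pose a := fun i => proj_r r (D i) == t.
have Mt : marginal r D t = #|a|.
  by rewrite /marginal; apply: eq_card => i; rewrite inE.
have Mf (f : {ffun 'I_K -> 'I_N}) :
    marginal r (fun j => D (f j)) t = (\sum_(j<K) a (f j))%N.
  rewrite /marginal -sum1_card big_mkcond /=; apply: eq_bigr => j _.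
  by rewrite inE /a; case: (proj_r r (D (f j)) == t).
rewrite Mt; under eq_bigr => f _ do rewrite Mf.
exact: (@per_t R N K a N0 K0).
Qed.
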